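(* Let $X$ be a topological space, $Y$ a metric space, $\alpha\ge 1$ a countable ordinal, and $f:X\to Y$ a Baire-$\alpha$ function. Then there exists a sequence $(G_n)_{n=1}^{\infty}$ of $\Sigma_\alpha$ subsets of $X\times Y$ such that $\bigcap_{n=1}^{\infty}G_n=gr(f)$ and $diam(G_n(x))\to 0$ as $n\to\infty$ for each $x\in X$. Furthermore, if $Y$ is a Fréchet space (with its translation invariant metric), the sets $G_n$ can be chosen to be $\Sigma_\alpha$-strips.
   Context: Borel classes in a topological space: a set is in $\Sigma_1$ iff it is open; for a countable ordinal $\alpha\ge1$, a set is in $\Pi_\alpha$ iff its complement is in $\Sigma_\alpha$; for $\alpha>1$, a set is in $\Sigma_\alpha$ iff it is a countable union $\bigcup_i A_i$ with each $A_i\in\Pi_{\alpha_i}$ for some $\alpha_i<\alpha$. Baire classes: Baire-0 functions are the continuous ones; for $\alpha\ge1$, a function is Baire-$\alpha$ if it is the pointwise limit of a sequence of functions $f_n$, each Baire-$\alpha_n$ with $\alpha_n<\alpha$. $gr(f)=\{(x,f(x)):x\in X\}$. For $G\subseteq X\times Y$ and $x\in X$, $G(x)=\{y\in Y:(x,y)\in G\}$; diameters are with respect to the metric of $Y$. A Fréchet space is a locally convex topological vector space that is complete with respect to a translation invariant metric. If $Y$ is a Fréchet space, a $\Sigma_\alpha$-strip is a $\Sigma_\alpha$ set $S\subseteq X\times Y$ such that $S(x)$ is convex for every $x\in X$. *)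

(* Defs.v *)
From HB Require Import structures.
From mathcomp Require Import all_boot all_order all_algebra.
From mathcomp Require Import all_classical all_reals all_analysis.

Set Implicit Arguments.
Unset Strict Implicit.
Unset Printing Implicit Defensive.

Import Order.TTheory GRing.Theory Num.Theory.
Local Open Scope classical_set_scope.
Local Open Scope ring_scope.

(* Countable ordinals, represented as Brouwer trees.                   *)
(* |OZ| = 0, |OS a| = |a|+1, |OL f| = sup_n |f n|.  Every countable     *)
(* ordinal is denoted by some tree and every tree denotes a countable   *)
(* ordinal.                                                              *)
Inductive cord : Type :=
| OZ : cord
| OS : cord -> cord
| OL : (nat -> cord) -> cord.

Inductive ole : cord -> cord -> Prop :=
| oleZ b : ole OZ b
| oleS a b : olt a b -> ole (OS a) b
| oleL f b : (forall n, ole (f n) b) -> ole (OL f) b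
with olt : cord -> cord -> Prop :=
| oltS a b : ole a b -> olt a (OS b)
| oltL a g n : olt a (g n) -> olt a (OL g).

Definition oone : cord := OS OZ.

Inductive Sigma_class (T : topologicalType) : cord -> set T -> Prop :=
| Sigma_open a (A : set T) :
    ole a oone -> ole oone a -> open A -> Sigma_class a A
| Sigma_union a (A : nat -> set T) (b : nat -> cord) :
    (forall i, ole oone (b i) /\ olt (b i) a) ->
    (forall i, Sigma_class (b i) (~` A i)) ->
    Sigma_class a (\bigcup_i A i).

Definition Pi_class (T : topologicalType) (a : cord) (A : set T) :=
  Sigma_class a (~` A).

Inductive Baire_class (X Y : topologicalType) : cord -> (X -> Y) -> Prop :=
| Baire_cont a (f : X -> Y) : ole a OZ -> continuous f -> Baire_class a f
| Baire_lim a (f : X -> Y) (g : nat -> X -> Y) (b : nat -> cord) :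
    (forall n, olt (b n) a) ->
    (forall n, Baire_class (b n) (g n)) ->
    (forall x, (fun n => g n x) @ \oo --> f x) ->
    Baire_class a f.

Definition graph_of (X Y : Type) (f : X -> Y) : set (X * Y) :=
  [set p | p.2 = f p.1].

Definition section_at (X Y : Type) (G : set (X * Y)) (x : X) : set Y :=
  [set y | G (x, y)].

(* diameter of a subset w.r.t. a distance function d, as an extended
   real (sup of the distances; ereal_sup of the empty set is -oo, but the
   sets to which it is applied below are nonempty). *)
Definition diam (R : realType) (Y : Type) (d : Y -> Y -> R) (S : set Y) : \bar R :=
  ereal_sup [set (d a b)%:E | a in S & b in S].

(* Fréchet spaces: a locally convex topological vector space Y         *)
(* (tvsType R is locally convex in MathComp-Analysis) together with a  *)
(* metric d which is translation invariant, induces the topology of Y, *)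
(* and is complete.                                                     *)
Definition frechet_metric (R : realType) (Y : tvsType R) (d : Y -> Y -> R) : Prop :=
  (forall x y, 0 <= d x y) /\
  (forall x y, d x y = 0 <-> x = y) /\
  (forall x y, d x y = d y x) /\
  (forall x y z, d x z <= d x y + d y z) /\
  (forall x y z, d (x + z) (y + z) = d x y) /\
  (forall (y : Y) (A : set Y),
      nbhs y A <-> exists2 e : R, 0 < e & [set z | d y z < e] `<=` A) /\
      (forall u : nat -> Y,
          (forall e : R, 0 < e -> exists N, forall m n, (N <= m)%N -> (N <= n)%N ->
             d (u m) (u n) < e) ->
          exists l : Y, u @ \oo --> l).

Definition Sigma_strip (R : realType) (X : topologicalType)
    (Y : tvsType R) (a : cord) (S : set (X * Y)) : Prop :=
  Sigma_class a S /\ forall x : X, convex_set (section_at S x).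

(* Main.v *)
Require Import Defs.
From mathcomp Require Import lra.
From HB Require Import structures.
From mathcomp Require Import all_boot all_order all_algebra.
From mathcomp Require Import all_classical all_reals all_analysis.

Import Order.TTheory GRing.Theory Num.Theory.
Import numFieldNormedType.Exports.
Local Open Scope classical_set_scope.
Local Open Scope ring_scope.
Lemma ole_L {g : nat -> cord} n {x} : ole x (g n) -> ole x (OL g).
Proof.
elim: x => [|x IH|f IH] H.
- exact: oleZ.
- inversion H; subst. apply: oleS. exact: (@oltL _ _ n).
- inversion H; subst. apply: oleL => k. exact: IH.
Qed.

Lemma ole_refl a : ole a a.
Proof.
elim: a => [|a IH|f IH].
- exact: oleZ.
- apply: oleS; exact: oltS.
- apply: oleL => n; exact: (ole_L n).
Qed.

Definition T1 b := forall a c, ole a b -> ole b c -> ole a c.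
Definition T2 b := forall a c, olt a b -> ole b c -> olt a c.
Definition T3 b := forall a c, ole a b -> olt b c -> olt a c.

Lemma T2_T1 {b} : T2 b -> T1 b.
Proof.
move=> H2; elim=> [|a IH|f IH] c H1 H.
- exact: oleZ.
- inversion H1; subst. apply: oleS. exact: H2 H.
- inversion H1; subst. apply: oleL => n; exact: IH.
Qed.

Lemma T1_T3 {b} : T1 b -> T3 b.
Proof.
move=> H1 a; elim=> [|c IH|h IH] Hab H.
- inversion H.
- inversion H; subst. apply: oltS. exact: H1 Hab H3.
- inversion H; subst. apply: (@oltL _ _ n). exact: IH.
Qed.

Lemma ord_T2 b : T2 b.
Proof.
elim: b => [|b IH|g IH] a c H.
- inversion H.
- inversion H; subst => H'. inversion H'; subst.
  exact: (T1_T3 (T2_T1 IH) _ _ H2 H1).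
- inversion H; subst => H'. inversion H'; subst. exact: (IH n _ _ H2 (H1 n)).
Qed.

Lemma ole_trans {b a c} : ole a b -> ole b c -> ole a c.
Proof. exact: (T2_T1 (ord_T2 b)). Qed.
Lemma olt_ole_trans {b a c} : olt a b -> ole b c -> olt a c.
Proof. exact: ord_T2. Qed.
Lemma ole_olt_trans {b a c} : ole a b -> olt b c -> olt a c.
Proof. exact: (T1_T3 (T2_T1 (ord_T2 b))). Qed.

Lemma ole_OS_inv {a b} : ole (OS a) b -> olt a b.
Proof. by move=> H; inversion H. Qed.
Lemma ole_OL_inv {f b} : ole (OL f) b -> forall n, ole (f n) b.
Proof. by move=> H; inversion H. Qed.
Lemma olt_OS_inv {a b} : olt a (OS b) -> ole a b.
Proof. by move=> H; inversion H. Qed.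
Lemma olt_OL_inv {a g} : olt a (OL g) -> exists n, olt a (g n).
Proof. by move=> H; inversion H; exists n. Qed.
Lemma olt_OZ_inv {a} : olt a OZ -> False.
Proof. by move=> H; inversion H. Qed.

Lemma ole_OS a : ole a (OS a).
Proof.
elim: a => [|a IH|f IH].
- exact: oleZ.
- apply: oleS; apply: oltS; exact: IH.
- apply: oleL => n. apply: ole_trans (IH n) _.
  apply: oleS. apply: oltS. exact: (ole_L n (ole_refl _)).
Qed.

Lemma olt_ole {a b} : olt a b -> ole a b.
Proof.
move=> H; inversion H; subst.
- exact: ole_trans (ole_OS _).
- apply: (ole_L n). apply: (@ole_trans (OS a)); first exact: ole_OS.
  by apply: oleS.
Qed.

Lemma olt_irr a : ~ olt a a.
Proof.
elim: a => [|a IH|f IH] H.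
- exact: olt_OZ_inv H.
- exact/IH/ole_OS_inv/olt_OS_inv.
- have [n Hn] := olt_OL_inv H. apply: (IH n).
  exact: (@ole_olt_trans (OL f) _ _ (ole_L n (ole_refl _)) Hn).
Qed.

Lemma olt_ole_False {a b} : olt a b -> ole b a -> False.
Proof. move=> H1 H2; apply: (olt_irr a); exact: olt_ole_trans H1 H2. Qed.

Lemma olt_trans {b a c} : olt a b -> olt b c -> olt a c.
Proof. move=> H1 H2; exact: olt_ole_trans H1 (olt_ole H2). Qed.

Lemma ord_total a b : ole a b \/ olt b a.
Proof.
elim: a b => [|a IH|f IH] b.
- left; exact: oleZ.
- elim: b => [|b _|g IHg].
  + right; apply: oltS; exact: oleZ.
  + case: (IH b) => H.
    * left; apply: oleS; exact: oltS.
    * right; apply: oltS; apply: oleS; exact: H.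
  + case: (pselect (exists n, ole (OS a) (g n))) => [[n Hn]|Hn].
    * left; exact: (ole_L n).
    * right; apply: oltS; apply: oleL => n.
      case: (IHg n) => H; first by exfalso; apply: Hn; exists n.
      exact: olt_OS_inv.
- case: (pselect (exists n, olt b (f n))) => [[n Hn]|Hn].
  + right; exact: (oltL Hn).
  + left; apply: oleL => n. case: (IH n b) => // H.
    by exfalso; apply: Hn; exists n.
Qed.

Lemma olt_Acc a : forall x, ole x a -> Acc olt x.
Proof.
elim: a => [|a IH|f IH] x Hx; constructor => y Hy.
- by have := olt_ole_trans Hy Hx => /olt_OZ_inv.
- by have := olt_ole_trans Hy Hx => /olt_OS_inv /IH.
- have := olt_ole_trans Hy Hx => /olt_OL_inv [n Hn].
  apply: (IH n). exact: olt_ole.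
Qed.

Lemma olt_wf : well_founded olt.
Proof. move=> a; exact: (@olt_Acc a a (ole_refl a)). Qed.

Lemma one_cases b : ole b oone \/ olt oone b.
Proof.
case: (ord_total b oone) => H; first by left.
by right.
Qed.

Lemma olt_pos {a b} : olt a b -> ole oone b.
Proof. move=> H; apply: oleS; apply: (@ole_olt_trans a) => //; exact: oleZ. Qed.

Lemma not_ole_one_zero : ~ ole oone OZ.
Proof. by move=> /ole_OS_inv /olt_OZ_inv. Qed.
Section SigmaLemmas.
Context {T : topologicalType}.

Lemma Sigma_open_inv {b} {S : set T} : Sigma_class b S -> ole b oone -> open S.
Proof.
case=> [a A _ _ oA //|a A c Hc _ Hb].
exfalso; have [H1 H2] := Hc 0%N.
exact: (olt_ole_False H2 (ole_trans Hb H1)).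
Qed.

Lemma Sigma_union_inv {b} {S : set T} : Sigma_class b S -> olt oone b ->
  exists (A : nat -> set T) (c : nat -> cord),
    (forall i, ole oone (c i) /\ olt (c i) b) /\
    (forall i, Sigma_class (c i) (~` A i)) /\ S = \bigcup_i A i.
Proof.
case=> [a A H1 _ _ H|a A c Hc HA _].
- by exfalso; exact: (olt_ole_False H H1).
- by exists A, c.
Qed.

Definition npair (j : nat) : nat * nat := odflt (0%N, 0%N) (unpickle j).

Lemma npair_pickle (p : nat * nat) : npair (pickle p) = p.
Proof. by rewrite /npair pickleK. Qed.

Lemma bigcup_pair (A : nat -> nat -> set T) :
  \bigcup_k \bigcup_m A k m = \bigcup_j A (npair j).1 (npair j).2.
Proof.
apply/seteqP; split => x.
- move=> [k _ [m _ H]]; exists (pickle (k, m)) => //.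
  by rewrite npair_pickle.
- move=> [j _ H]; exists (npair j).1 => //; exists (npair j).2 => //.
Qed.

Lemma Sigma_bigcup b (S : nat -> set T) : ole oone b ->
  (forall n, Sigma_class b (S n)) -> Sigma_class b (\bigcup_n S n).
Proof.
move=> Hb HS; case: (one_cases b) => Hb1.
- apply: Sigma_open => //; apply: bigcup_open => n _.
  exact: Sigma_open_inv (HS n) Hb1.
- have H : forall n, exists p : (nat -> set T) * (nat -> cord),
      (forall i, ole oone (p.2 i) /\ olt (p.2 i) b) /\
      (forall i, Sigma_class (p.2 i) (~` p.1 i)) /\ S n = \bigcup_i p.1 i.
    move=> n; have [A [c [H1 [H2 H3]]]] := Sigma_union_inv (HS n) Hb1.
    by exists (A, c).
  have [f Hf] := choice H.
  have -> : \bigcup_n S n = \bigcup_n \bigcup_i (f n).1 i.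
    by apply: eq_bigcupr => n _; have [_ [_ ->]] := Hf n.
  rewrite bigcup_pair.
  apply: (@Sigma_union _ _ _ (fun j => (f (npair j).1).2 (npair j).2)) => j.
  + by have [H1 _] := Hf (npair j).1; exact: H1.
  + by have [_ [H2 _]] := Hf (npair j).1; exact: H2.
Qed.

Lemma Sigma_set0 b : ole oone b -> Sigma_class b (set0 : set T).
Proof.
move=> Hb; case: (one_cases b) => Hb1.
- by apply: Sigma_open => //; exact: open0.
- have -> : (set0 : set T) = \bigcup_(i : nat) set0 by rewrite bigcup0.
  apply: (@Sigma_union _ _ (fun _ => set0) (fun _ => oone)) => i.
  + by split => //; exact: ole_refl.
  + rewrite setC0; apply: Sigma_open; try exact: ole_refl. exact: openT.
Qed.

End SigmaLemmas.
Lemma ord_max_I N (e : 'I_N -> cord) b : olt oone b -> (forall i, olt (e i) b) ->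
  exists c, [/\ olt c b, ole oone c & forall i, ole (e i) c].
Proof.
move=> Hb He.
suff : forall M, exists c, [/\ olt c b, ole oone c & forall i : 'I_N, (i < M)%N -> ole (e i) c].
  by move=> /(_ N) [c [H1 H2 H3]]; exists c; split => // i; apply: H3.
elim=> [|M [c [H1 H2 H3]]].
- by exists oone; split => //; exact: ole_refl.
- case: (ltnP M N) => HM.
  + pose i0 := Ordinal HM.
    case: (ord_total (e i0) c) => Hi.
    * exists c; split => // i; rewrite ltnS leq_eqVlt => /orP[/eqP Ei|Hi'].
      -- have Ei0 : i = i0 by apply: ord_inj; rewrite /= Ei.
         by rewrite Ei0.
      -- exact: H3.
    * exists (e i0); split => //.
      -- exact: ole_trans H2 (olt_ole Hi).
      -- move=> i; rewrite ltnS leq_eqVlt => /orP[/eqP Ei|Hi'].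
         ++ have Ei0 : i = i0 by apply: ord_inj; rewrite /= Ei.
            by rewrite Ei0 /=; exact: ole_refl.
         ++ exact: ole_trans (H3 i Hi') (olt_ole Hi).
  + exists c; split => // i _; apply: H3; exact: leq_trans (ltn_ord i) HM.
Qed.

Lemma Baire_inv {X Y : topologicalType} {a} {f : X -> Y} : Baire_class a f ->
  (ole a OZ /\ continuous f) \/
  exists (g : nat -> X -> Y) (c : nat -> cord), (forall n, olt (c n) a) /\
    (forall n, Baire_class (c n) (g n)) /\ forall x, g n x @[n --> \oo] --> f x.
Proof. by case=> [a' f' H1 H2|a' f' g c H1 H2 H3]; [left|right; exists g, c]. Qed.

Lemma invS_gt0 {R : realType} (k : nat) : 0 < (k.+1%:R^-1 : R).
Proof. by rewrite invr_gt0 ltr0Sn. Qed.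

Section GL.
Context {R : realType} {X W Y T : topologicalType} (dT : T -> T -> R).
Hypothesis dT_sym : forall s t, dT s t = dT t s.
Hypothesis dT_tri : forall s t u, dT s u <= dT s t + dT t u.
Hypothesis dT_nbhs : forall t (A : set T),
  nbhs t A <-> exists2 e : R, 0 < e & [set u | dT t u < e] `<=` A.
Variables (N : nat) (Phi : ('I_N -> Y) -> W -> T).
Hypothesis P1 : forall H : 'I_N -> X -> Y, (forall i, continuous (H i)) ->
  continuous (fun p : X * W => Phi (fun i => H i p.1) p.2).
Hypothesis P2 : forall (Hn : nat -> 'I_N -> Y) (H : 'I_N -> Y) w,
  (forall i, Hn n i @[n --> \oo] --> H i) -> Phi (Hn n) w @[n --> \oo] --> Phi H w.

Lemma cvg_dT {u : nat -> T} {t} : u n @[n --> \oo] --> t ->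
  forall e, 0 < e -> exists M, forall n, (M <= n)%N -> dT t (u n) < e.
Proof.
move=> H e e0.
have : nbhs t [set v | dT t v < e] by apply/dT_nbhs; exists e.
by move/H => [M _ HM]; exists M => n /HM.
Qed.

Lemma dT_open_compl (O : set T) (d : R) :
  open (~` [set t | forall u, dT t u < d -> O u]).
Proof.
rewrite openE => t /= Ht.
move/existsNP: Ht => [u /not_implyP [Hu1 Hu2]].
rewrite /interior; apply/dT_nbhs; exists (d - dT t u); first by rewrite subr_gt0.
move=> t' /= Ht' HC; apply: Hu2; apply: HC.
apply: (le_lt_trans (dT_tri t' t u)); rewrite dT_sym.
by rewrite -ltrBrDr.
Qed.

Lemma GL b : ole oone b -> forall (H : 'I_N -> X -> Y) (e : 'I_N -> cord),
  (forall i, olt (e i) b) -> (forall i, Baire_class (e i) (H i)) ->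
  forall O : set T, open O ->
  Sigma_class b [set p : X * W | O (Phi (fun i => H i p.1) p.2)].
Proof.
elim/(well_founded_ind olt_wf): b => b IH Hb H e He HB O oO.
case: (one_cases b) => Hb1.
- have Hc : forall i, continuous (H i).
    move=> i; case: (Baire_inv (HB i)) => [[_ //]|[g [cs [H1 _]]]].
    exfalso; have := olt_ole_trans (He i) Hb1 => /olt_OS_inv He0.
    exact: olt_OZ_inv (olt_ole_trans (H1 0%N) He0).
  apply: Sigma_open => //.
  apply: (@open_comp _ _ (fun p : X * W => Phi (fun i => H i p.1) p.2) O) => //.
  by move=> p _; exact: (P1 _ Hc p).
- have [c [Hcb Hc1 Hce]] := @ord_max_I _ _ _ Hb1 He.
  have Hseq : forall i, exists q : (nat -> X -> Y) * (nat -> cord),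
      [/\ forall n, olt (q.2 n) c, forall n, Baire_class (q.2 n) (q.1 n) &
        forall x, q.1 n x @[n --> \oo] --> H i x].
    move=> i; case: (Baire_inv (HB i)) => [[_ Hcont]|[g [cs [H1 [H2 H3]]]]].
    + exists ((fun _ => H i), (fun _ => OZ)); split => /=.
      * by move=> n; exact: ole_OS_inv.
      * by move=> n; apply: Baire_cont => //; exact: oleZ.
      * by move=> x; exact: cvg_cst.
    + exists (g, cs); split => //= n; exact: olt_ole_trans (H1 n) (Hce i).
  have [q Hq] := choice Hseq.
  pose C k := [set t : T | forall u, dT t u < k.+1%:R^-1 -> O u].
  pose A k m := [set p : X * W | forall n, (m <= n)%N ->
    C k (Phi (fun i => (q i).1 n p.1) p.2)].
  have HS : [set p : X * W | O (Phi (fun i => H i p.1) p.2)] =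
      \bigcup_k \bigcup_m A k m.
    apply/seteqP; split => p /=.
    + move=> Op.
      have : nbhs (Phi (fun i => H i p.1) p.2) O by move: oO; rewrite openE => /(_ _ Op).
      move=> /dT_nbhs [eps eps0 Heps].
      have [k Hk] := @ltr_add_invr R 0 (eps / 2) ltac:(by rewrite divr_gt0).
      rewrite add0r in Hk.
      have Hcv : Phi (fun i => (q i).1 n p.1) p.2 @[n --> \oo] -->
          Phi (fun i => H i p.1) p.2.
        by apply: P2 => i; case: (Hq i) => _ _; apply.
      have [M HM] := cvg_dT Hcv _ (invS_gt0 k).
      exists k => //; exists M => // n Hn u Hu; apply: Heps => /=.
      apply: (le_lt_trans (dT_tri _ (Phi (fun i => (q i).1 n p.1) p.2) _)).
      apply: (@lt_le_trans _ _ (k.+1%:R^-1 + k.+1%:R^-1)); first exact: ltrD (HM n Hn) Hu.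
      by move: Hk; set z := k.+1%:R^-1; lra.
    + move=> [k _ [m _ Hkm]].
      have Hcv : Phi (fun i => (q i).1 n p.1) p.2 @[n --> \oo] -->
          Phi (fun i => H i p.1) p.2.
        by apply: P2 => i; case: (Hq i) => _ _; apply.
      have [M HM] := cvg_dT Hcv _ (invS_gt0 k).
      apply: (Hkm (maxn m M) (leq_maxl _ _)).
      by rewrite dT_sym; apply: HM; exact: leq_maxr.
  rewrite HS bigcup_pair.
  apply: (@Sigma_union _ _ _ (fun _ => c)) => j; first by split.
  set k := (npair j).1; set m := (npair j).2.
  have -> : ~` A k m = \bigcup_n [set p : X * W |
      (~` C k) (Phi (fun i => (q i).1 (m + n)%N p.1) p.2)].
    apply/seteqP; split => p /=.
    + move=> /existsNP [n /not_implyP [Hn1 Hn2]].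
      exists (n - m)%N => //=; by rewrite subnKC.
    + move=> [n _ /= Hn] Hall; apply: Hn; apply: Hall; exact: leq_addr.
  apply: Sigma_bigcup => // n.
  apply: (IH c Hcb Hc1 (fun i => (q i).1 (m + n)%N) (fun i => (q i).2 (m + n)%N)).
  - by move=> i; case: (Hq i).
  - by move=> i; case: (Hq i).
  - exact: dT_open_compl.
Qed.


End GL.
Section Finish.
Context {R : realType} {X Y : Type} (d : Y -> Y -> R).
Hypothesis d_ge0 : forall a b, 0 <= d a b.
Hypothesis d_eq0 : forall a b, d a b = 0 -> a = b.
Hypothesis d_xx : forall a, d a a = 0.
Hypothesis d_tri : forall a b c, d a c <= d a b + d b c.

Lemma diam_bounds (S : set Y) y0 (e : R) : S y0 ->
  (forall y, S y -> d y y0 <= e /\ d y0 y <= e) ->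
  (0 <= diam d S /\ diam d S <= (e + e)%:E)%E.
Proof.
move=> Sy0 HS; split.
- have -> : (0 = (d y0 y0)%:E)%E by rewrite d_xx.
  apply: ereal_sup_ubound; exists y0 => //; by exists y0.
- apply: ge_ereal_sup => z [a Sa [b Sb <-]]; rewrite lee_fin.
  apply: (le_trans (d_tri a y0 b)); apply: lerD.
  + by have [] := HS a Sa.
  + by have [] := HS b Sb.
Qed.

Lemma finish (f : X -> Y) (G : nat -> set (X * Y)) :
  (forall j x, G j (x, f x)) ->
  (forall x e, 0 < e -> exists J, forall j, (J <= j)%N -> forall y,
     G j (x, y) -> d y (f x) < e /\ d (f x) y < e) ->
  \bigcap_n G n = graph_of f /\
  (forall x, (fun n => diam d (section_at (G n) x)) @ \oo --> 0%E).
Proof.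
move=> Hgr Hsm; split.
- apply/seteqP; split => -[x y] /=; last first.
    by rewrite /graph_of /= => ->; move=> n _; exact: Hgr.
  move=> Hxy; rewrite /graph_of /=; symmetry; apply: d_eq0.
  have := d_ge0 (f x) y; rewrite le_eqVlt => /orP[/eqP <- //|Hpos].
  have [J HJ] := Hsm x _ Hpos.
  have [_ H2] := HJ J (leqnn J) y (Hxy J I).
  by rewrite ltxx in H2.
- move=> x; apply/fine_cvgP; split.
  + have [J HJ] := Hsm x 1 ltr01.
    exists J => // j /= Hj.
    have [H0 H1] := @diam_bounds (section_at (G j) x) (f x) 1 (Hgr j x)
      (fun y Hy => let: conj a b := HJ j Hj y Hy in conj (ltW a) (ltW b)).
    by move: H0 H1; case: (diam d _).
  + apply/cvgrPdist_lt => e e0.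
    have [J HJ] := Hsm x (e / 4) ltac:(by rewrite divr_gt0).
    exists J => // j /= Hj.
    have [H0 H1] := @diam_bounds (section_at (G j) x) (f x) (e / 4) (Hgr j x)
      (fun y Hy => let: conj a b := HJ j Hj y Hy in conj (ltW a) (ltW b)).
    move: H0 H1; case: (diam d _) => //= r; rewrite !lee_fin => H0 H1.
    rewrite sub0r normrN ger0_norm //.
    by apply: (le_lt_trans H1); lra.
Qed.

End Finish.
Lemma invS_le {R : realType} (k j : nat) : (k <= j)%N -> (j.+1%:R^-1 : R) <= k.+1%:R^-1.
Proof. by move=> H; rewrite lef_pV2 ?posrE ?ltr0Sn // ler_nat ltnS. Qed.

Lemma dR_nbhs {R : realType} (t : R) (A : set R) :
  nbhs t A <-> exists2 e : R, 0 < e & [set u | `|t - u| < e] `<=` A.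
Proof.
split => [/nbhs_ballP [e e0 H]|[e e0 H]].
- by exists e => // u Hu; apply: H; rewrite -ball_normE.
- apply/nbhs_ballP; exists e => // u Hu; apply: H; by rewrite -ball_normE in Hu.
Qed.

Lemma mdist_nbhs {R : realType} {Y : metricType R} (t : Y) (A : set Y) :
  nbhs t A <-> exists2 e : R, 0 < e & [set u | mdist t u < e] `<=` A.
Proof.
rewrite -metricType_numDomainType.filter_from_mdist_nbhs.
by split => [[e e0 H]|[e e0 H]]; exists e.
Qed.



Lemma mdist_cont {R : realType} {Y : metricType R} :
  continuous (fun q : Y * Y => mdist q.1 q.2).
Proof.
move=> [a b]; apply/cvgrPdist_lt => e e0.
have e2 : 0 < e / 2 by rewrite divr_gt0.
exists ([set z | mdist a z < e / 2], [set z | mdist b z < e / 2]).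
  by split => /=; apply/mdist_nbhs; exists (e / 2).
move=> [q1 q2] [/= h1 h2].
have t1 := metric_triangle q1 a q2.
have t2 := metric_triangle a b q2.
have t3 := metric_triangle a q1 b.
have t4 := metric_triangle q1 q2 b.
rewrite (metric_sym q1 a) in t1. rewrite (metric_sym q2 b) in t4.
rewrite ltr_norml; apply/andP; split; lra.
Qed.

Lemma metric_part (R : realType) (X : topologicalType) (a : cord) (Ha : ole oone a)
  (Y : metricType R) (f : X -> Y) (Hf : Baire_class a f) :
  exists G : nat -> set (X * Y),
      (forall n, Sigma_class a (G n)) /\
      \bigcap_n G n = graph_of f /\
      (forall x, (fun n => diam mdist (section_at (G n) x)) @ \oo --> 0%E).
Proof.
case: (Baire_inv Hf) => [[Ha0 _]|[g [c [Hc [Hg Hcv]]]]].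
  by exfalso; apply: not_ole_one_zero; exact: ole_trans Ha Ha0.
pose G j := \bigcup_n [set p : X * Y | mdist (g (j + n)%N p.1) p.2 < j.+1%:R^-1].
exists G; split.
- move=> j; apply: Sigma_bigcup => // n.
  have P1 : forall H : 'I_1 -> X -> Y, (forall i, continuous (H i)) ->
      continuous (fun p : X * Y => mdist (H ord0 p.1) p.2).
    move=> H HH p.
    apply: (@continuous_comp _ _ _ (fun p : X * Y => (H ord0 p.1, p.2))
      (fun q : Y * Y => mdist q.1 q.2)); last exact: mdist_cont.
    apply: cvg_pair; last exact: cvg_snd.
    apply: (@continuous_comp _ _ _ fst (H ord0)); first exact: cvg_fst.
    exact: HH.
  have P2 : forall (Hn : nat -> 'I_1 -> Y) (H : 'I_1 -> Y) w,
      (forall i, Hn n i @[n --> \oo] --> H i) ->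
      mdist (Hn n ord0) w @[n --> \oo] --> mdist (H ord0) w.
    move=> Hn H w HH.
    exact: (cvg_comp _ _ (cvg_pair (HH ord0) (cvg_cst w)) (mdist_cont (H ord0, w))).
  exact: (@GL R X Y Y R (fun s t => `|s - t|) (fun s t => distrC s t)
    (fun s t u => ler_distD t s u) dR_nbhs 1 (fun z w => mdist (z ord0) w) P1 P2
    a Ha (fun _ => g (j + n)%N) (fun _ => c (j + n)%N) (fun _ => Hc _) (fun _ => Hg _)
    _ (@open_lt R (j.+1%:R^-1))).
- apply: (@finish R X Y mdist (@mdist_ge0 _ _) (@mdist_positivity _ _) (@mdistxx _ _) (@metric_triangle _ _)).
  + move=> j x.
    have [M HM] := cvg_dT mdist mdist_nbhs (Hcv x) _ (invS_gt0 j).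
    exists M => //=; rewrite metric_sym; apply: HM; exact: leq_addl.
  + move=> x e e0.
    have [k Hk] := @ltr_add_invr R 0 (e / 2) ltac:(by rewrite divr_gt0).
    rewrite add0r in Hk.
    have [M HM] := cvg_dT mdist mdist_nbhs (Hcv x) (e / 2) ltac:(by rewrite divr_gt0).
    exists (maxn k M) => j Hj y [n _ /= Hy].
    have h1 := HM (j + n)%N (leq_trans (leq_maxr k M) (leq_trans Hj (leq_addr n j))).
    have h2 := @invS_le R _ _ (leq_trans (leq_maxl k M) Hj).
    have t1 := metric_triangle (f x) (g (j + n)%N x) y.
    rewrite (metric_sym y (f x)).
    have : mdist (f x) y < e.
      move: h1 Hy h2 Hk t1. set A := mdist (f x) (g _ x). set B := mdist (g _ x) y. set C := mdist (f x) y. set D := (j.+1%:R^-1). set E := (k.+1%:R^-1). move=> *. lra.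
    by move=> h; split.
Qed.
Local Open Scope convex_scope.
Section TvsLemmas.
Context {R : realType} {Y : tvsType R}.

Lemma cvg_addT {T} {F : set_system T} {FF : Filter F} (f g : T -> Y) (a b : Y) :
  f t @[t --> F] --> a -> g t @[t --> F] --> b -> f t + g t @[t --> F] --> a + b.
Proof.
move=> Hf Hg.
exact: (cvg_comp _ _ (cvg_pair Hf Hg) (@add_continuous Y (a, b))).
Qed.

Lemma cvg_subT {T} {F : set_system T} {FF : Filter F} (f g : T -> Y) (a b : Y) :
  f t @[t --> F] --> a -> g t @[t --> F] --> b -> f t - g t @[t --> F] --> a - b.
Proof.
move=> Hf Hg.
exact: (cvg_comp _ _ (cvg_pair Hf Hg) (@sub_continuous Y (a, b))).
Qed.

Lemma cvg_scaleT {T} {F : set_system T} {FF : Filter F} (s : T -> R) (f : T -> Y) (k : R) (a : Y) :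
  s t @[t --> F] --> k -> f t @[t --> F] --> a -> s t *: f t @[t --> F] --> k *: a.
Proof.
move=> Hs Hf.
exact: (cvg_comp _ _ (@cvg_pair _ _ _ _ (nbhs (k : R^o)) _ _ _ _ _ _ Hs Hf)
  (@scale_continuous R Y (k, a))).
Qed.

Lemma cvg_lincomb {I : Type} {T} {F : set_system T} {FF : Filter F} (s : seq I)
    (w : I -> R) (f : I -> T -> Y) (l : I -> Y) :
  (forall i, f i t @[t --> F] --> l i) ->
  \sum_(i <- s) w i *: f i t @[t --> F] --> \sum_(i <- s) w i *: l i.
Proof.
move=> Hf; elim: s => [|i s IH].
- rewrite big_nil.
  have -> : (fun t => \sum_(i <- [::]) w i *: f i t) = (fun=> 0) by apply: funext => t; rewrite big_nil.
  exact: cvg_cst.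
- rewrite big_cons.
  have -> : (fun t => \sum_(j <- i :: s) w j *: f j t) =
    (fun t => w i *: f i t + \sum_(j <- s) w j *: f j t).
    by apply: funext => t; rewrite big_cons.
  apply: cvg_addT => //; apply: cvg_scaleT => //; exact: cvg_cst.
Qed.

Lemma conv_comb (V : set Y) {I : eqType} (s : seq I) (w : I -> R) (v : I -> Y) :
  convex_set V -> (forall i, i \in s -> 0 <= w i) -> \sum_(i <- s) w i = 1 ->
  (forall i, i \in s -> V (v i)) -> V (\sum_(i <- s) w i *: v i).
Proof.
move=> cV; elim: s w => [|i s IH] w Hw Hs Hv.
- by rewrite big_nil in Hs; move/eqP: Hs; rewrite eq_sym oner_eq0.
- rewrite big_cons in Hs; rewrite big_cons. set r := \sum_(j <- s) w j in Hs.
  have r0 : 0 <= r.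
    rewrite /r big_seq; apply: sumr_ge0 => j js; apply: Hw.
    by rewrite inE js orbT.
  have wi0 : 0 <= w i by apply: Hw; rewrite inE eqxx.
  have wi1 : w i = 1 - r by rewrite -Hs addrK.
  case: (eqVneq r 0) => Hr.
  + have H0 : forall j, j \in s -> w j = 0.
      move: Hr; rewrite /r big_seq => /eqP; rewrite psumr_eq0.
      * by move=> /allP H j js; have := H j js; rewrite js /= => /eqP.
      * move=> j js; apply: Hw; by rewrite inE js orbT.
    rewrite big_seq big1; last by move=> j js; rewrite H0 // scale0r.
    rewrite addr0 wi1 Hr subr0 scale1r; apply: Hv; by rewrite inE eqxx.
  + have rpos : 0 < r by rewrite lt_neqAle eq_sym Hr r0.
    pose w' j := w j / r.
    have Hz : V (\sum_(j <- s) w' j *: v j).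
      apply: IH.
      * move=> j js; rewrite /w' divr_ge0 //; apply: Hw; by rewrite inE js orbT.
      * by rewrite /w' -mulr_suml divff.
      * move=> j js; apply: Hv; by rewrite inE js orbT.
    set z := \sum_(j <- s) w' j *: v j in Hz.
    have -> : \sum_(j <- s) w j *: v j = r *: z.
      rewrite /z scaler_sumr; apply: eq_bigr => j _.
      by rewrite scalerA /w' mulrCA divff ?mulr1 // gt_eqF.
    have h1 : w i <= 1 by rewrite wi1 lerBlDr lerDl.
    have := cV (v i) z (Itv01 wi0 h1).
    rewrite !inE => /(_ ltac:(apply: Hv; by rewrite inE eqxx) Hz).
    suff -> : w i *: v i + r *: z = (v i : convex_lmodType Y) <| Itv01 wi0 h1 |> (z : convex_lmodType Y) by [].

    change (w i *: v i + r *: z = w i *: v i + (1 - w i) *: z).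
    by congr (_ + _); rewrite wi1 opprB addrC subrK.
Qed.

End TvsLemmas.
Lemma conv_nbhs {R : realType} {Y : tvsType R} (A : set Y) : nbhs (0 : Y) A ->
  exists V : set Y, [/\ open V, V 0, convex_set (V : set (convex_lmodType Y)) & V `<=` A].
Proof.
move=> HA; have [B HBc [HBo HBx]] := @locally_convex R Y.
have := HBx 0 A HA => -[U [BU U0] HUA].
exists U; split => //; first exact: HBo.
by apply: HBc; rewrite inE.
Qed.

Definition combF {R : realType} {X : Type} {Y : lmodType R} (g : nat -> X -> Y)
  (j : nat) (s : seq (rat * nat)) (x : X) : Y :=
  \sum_(p <- s) ratr p.1 *: g (j + p.2)%N x.

Definition validF (R : realType) (s : seq (rat * nat)) : Prop :=
  (forall p, p \in s -> 0 <= (ratr p.1 : R)) /\ \sum_(p <- s) (ratr p.1 : R) = 1.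

Definition dec_seq (t : nat) : seq (rat * nat) := odflt [::] (unpickle t).
Lemma frechet_part (R : realType) (X : topologicalType) (a : cord) (Ha : ole oone a)
  (Y : tvsType R) (d : Y -> Y -> R) (f : X -> Y)
  (Hd : frechet_metric d) (Hf : Baire_class a f) :
  exists G : nat -> set (X * Y),
      (forall n, Sigma_strip a (G n)) /\
      \bigcap_n G n = graph_of f /\
      (forall x, (fun n => diam d (section_at (G n) x)) @ \oo --> 0%E).
Proof.
move: Hd => [d_ge0 [d_eq0 [d_sym [d_tri [d_tr [d_nbhs _]]]]]].
have d_xx : forall u, d u u = 0 by move=> u; apply/d_eq0.
have d_0 : forall u v, d u v = d 0 (v - u).
  by move=> u v; rewrite -(d_tr u v (- u)) subrr.
have d0_add : forall p q, d 0 (p + q) <= d 0 p + d 0 q.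
  move=> p q; apply: (le_trans (d_tri 0 p (p + q))).
  by rewrite (d_0 p (p + q)) addrAC subrr add0r.
case: (Baire_inv Hf) => [[Ha0 _]|[g [c [Hc [Hg Hcv]]]]].
  by exfalso; apply: not_ole_one_zero; exact: ole_trans Ha Ha0.
have HV : forall j, exists V : set Y, [/\ open V, V 0,
    convex_set (V : set (convex_lmodType Y)) & V `<=` [set w | d 0 w < j.+1%:R^-1]].
  move=> j; apply: conv_nbhs; apply/d_nbhs; exists (j.+1%:R^-1).
  + exact: invS_gt0.
  + by [].
have [Vf HVf] := choice HV.
pose P j s := [set q : X * Y | validF R s /\ Vf j (q.2 - combF g j s q.1)].
pose G j := \bigcup_t P j (dec_seq t).
have secG : forall j x y, G j (x, y) <-> exists s, validF R s /\ Vf j (y - combF g j s x).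
  move=> j x y; split => [[t _ [Hv HV']]|[s [Hv HV']]]; first by exists (dec_seq t).
  by exists (pickle s) => //; rewrite /dec_seq pickleK.
have grph : forall j x, G j (x, f x).
  move=> j x; apply/secG.
  have [Hopen HV0 _ _] := HVf j.
  have : nbhs (0 : Y) (Vf j) by move: Hopen; rewrite openE => /(_ _ HV0).
  move=> /d_nbhs [e e0 He].
  have [M HM] := cvg_dT d d_nbhs (Hcv x) e e0.
  exists [:: (1%R, M)]; split.
  + split.
    * by move=> p; rewrite inE => /eqP -> /=; rewrite rmorph1 ler01.
    * by rewrite big_seq1 /= rmorph1.
  + apply: He => /=; rewrite /combF big_seq1 /= rmorph1 scale1r.
    rewrite -d_0 d_sym; apply: HM; exact: leq_addl.
have key : forall x e, 0 < e -> exists J, forall j, (J <= j)%N -> forall y,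
    G j (x, y) -> d y (f x) < e /\ d (f x) y < e.
  move=> x e e0.
  have e2 : 0 < e / 2 by rewrite divr_gt0.
  have [U [Uo U0 Uc UA]] : exists U : set Y, [/\ open U, U 0,
      convex_set (U : set (convex_lmodType Y)) & U `<=` [set w | d 0 w < e / 2]].
    apply: conv_nbhs; apply/d_nbhs; exists (e / 2); [exact: e2 | by []].
  have : nbhs (0 : Y) U by move: Uo; rewrite openE => /(_ _ U0).
  move=> /d_nbhs [e' e'0 He'].
  have [M HM] := cvg_dT d d_nbhs (Hcv x) e' e'0.
  have [k Hk] := @ltr_add_invr R 0 (e / 2) e2.
  rewrite add0r in Hk.
  exists (maxn k M) => j Hj y /secG [s [[Hw Hs] Hy]].
  have [_ _ _ Hsub] := HVf j.
  have h1 := Hsub _ Hy.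
  have h2 : U (combF g j s x - f x).
    have -> : combF g j s x - f x = \sum_(p <- s) ratr p.1 *: (g (j + p.2)%N x - f x).
      rewrite /combF; symmetry; under eq_bigr do rewrite scalerBr.
      by rewrite sumrB -scaler_suml Hs scale1r.
    apply: (@conv_comb _ _ U) => // p ps.
    apply: He' => /=; rewrite -d_0; apply: HM.
    exact: leq_trans (leq_maxr k M) (leq_trans Hj (leq_addr _ _)).
  have h3 := UA _ h2.
  have h4 := @invS_le R _ _ (leq_trans (leq_maxl k M) Hj).
  have h5 : d (f x) y < e.
    rewrite d_0.
    have -> : y - f x = (y - combF g j s x) + (combF g j s x - f x) by rewrite addrA subrK.
    apply: (le_lt_trans (d0_add _ _)).
    move: h1 h3 h4 Hk => /=; set A := d 0 _; set B := d 0 _; set C := j.+1%:R^-1; set D := k.+1%:R^-1.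
    move=> *; lra.
  by split => //; rewrite d_sym.
exists G; split; last first.
  exact: (@finish R X Y d d_ge0 (fun u v => proj1 (d_eq0 u v)) d_xx d_tri f G grph key).
move=> j; split.
- apply: Sigma_bigcup => // t.
  set s := dec_seq t.
  case: (pselect (validF R s)) => Hv; last first.
    have -> : P j s = set0 by apply/seteqP; split => q // [].
    exact: Sigma_set0.
  pose p0 : rat * nat := (0, 0%N).
  pose Phi := fun (z : 'I_(size s) -> Y) (w : Y) =>
    w - \sum_(i < size s) (ratr (nth p0 s i).1 : R) *: z i.
  have -> : P j s = [set q : X * Y |
      Vf j (Phi (fun i => g (j + (nth p0 s i).2)%N q.1) q.2)].
    apply/seteqP; split => q /=.
    + by move=> [_ H]; rewrite /combF (big_nth p0) big_mkord in H.
    + by move=> H; split => //; rewrite /combF (big_nth p0) big_mkord.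
  have P1 : forall H : 'I_(size s) -> X -> Y, (forall i, continuous (H i)) ->
      continuous (fun p : X * Y => Phi (fun i => H i p.1) p.2).
    move=> H HH p; rewrite /Phi.
    apply: (@cvg_subT _ _ _ _ _ snd); first exact: cvg_snd.
    apply: cvg_lincomb => i.
    apply: (@continuous_comp _ _ _ fst (H i)); [exact: cvg_fst | exact: HH].
  have P2 : forall (Hn : nat -> 'I_(size s) -> Y) (H : 'I_(size s) -> Y) w,
      (forall i, Hn n i @[n --> \oo] --> H i) -> Phi (Hn n) w @[n --> \oo] --> Phi H w.
    move=> Hn H w HH; rewrite /Phi.
    apply: cvg_subT; [exact: cvg_cst | exact: cvg_lincomb].
  have [Hopen _ _ _] := HVf j.
  exact: (@GL R X Y Y Y d d_sym d_tri d_nbhs (size s) Phi P1 P2 a Ha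
    (fun i => g (j + (nth p0 s i).2)%N) (fun i => c (j + (nth p0 s i).2)%N)
    (fun i => Hc _) (fun i => Hg _) (Vf j) Hopen).
- move=> x y1 y2 l; rewrite !inE /section_at /=.
  move=> /secG [s1 [[Hw1 Hs1] HV1]] /secG [s2 [[Hw2 Hs2] HV2]].
  apply/secG.
  set k1 := combF g j s1 x; set k2 := combF g j s2 x.
  have [Hopen _ Hconv _] := HVf j.
  have Hw0 : Vf j (l%:num *: (y1 - k1) + (1 - l%:num) *: (y2 - k2)).
    have := Hconv (y1 - k1) (y2 - k2) l.
    by rewrite !inE => /(_ HV1 HV2).
  pose h (tau : R) := l%:num *: y1 + (1 - l%:num) *: y2 -
    ((l%:num - tau) *: k1 + (1 - (l%:num - tau)) *: k2).
  have h0 : h 0 = l%:num *: (y1 - k1) + (1 - l%:num) *: (y2 - k2).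
    by rewrite /h subr0 !scalerBr opprD addrACA.
  have hcont : h tau @[tau --> (0 : R)] --> h 0.
    rewrite /h; apply: cvg_subT; first exact: cvg_cst.
    apply: cvg_addT; apply: cvg_scaleT; try exact: cvg_cst.
    + by apply: cvgB; [exact: cvg_cst | exact: cvg_id].
    + apply: cvgB; first exact: cvg_cst.
      by apply: cvgB; [exact: cvg_cst | exact: cvg_id].
  have : nbhs (h 0) (Vf j) by rewrite h0; move: Hopen; rewrite openE => /(_ _ Hw0).
  move=> /hcont /dR_nbhs [delta delta0 Hdelta].
  have [eps [eps0 eps1 epsd]] : exists eps : R, [/\ 0 < eps, eps <= 1 & eps <= delta].
    case: (lerP delta 1) => Hd1; first by exists delta.
    by exists 1; split => //; exact: ltW.
  have l0 : 0 <= l%:num by apply: ge0.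
  have l1 : l%:num <= 1 by apply: le1.
  have el0 : 0 <= eps * l%:num by rewrite mulr_ge0 // ltW.
  have el1 : eps * l%:num <= eps by rewrite ler_piMr // ltW.
  have el2 : eps * l%:num <= l%:num by rewrite ler_piMl.
  have el3 : eps + l%:num - 1 <= eps * l%:num.
    have h1e : 0 <= 1 - eps by rewrite subr_ge0.
    have h1l : 0 <= 1 - l%:num by rewrite subr_ge0.
    have := mulr_ge0 h1e h1l.
    rewrite mulrBl !mulrBr !mul1r mulr1 => *; lra.
  have [q] := @rat_in_itvoo R ((1 - eps) * l%:num) ((1 - eps) * l%:num + eps)
    ltac:(by rewrite ltrDl).
  rewrite in_itv /= => /andP [q1 q2].
  have qr0 : 0 <= (ratr q : R) by move: q1 q2; rewrite mulrBl mul1r => *; lra.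
  have qr1 : (ratr q : R) <= 1 by move: q1 q2; rewrite mulrBl mul1r => *; lra.
  have hq : Vf j (h (l%:num - ratr q)).
    apply: Hdelta => /=.
    rewrite sub0r normrN ltr_norml; apply/andP; split;
      move: q1 q2; rewrite mulrBl mul1r => *; lra.
  exists ([seq (q * p.1, p.2) | p <- s1] ++ [seq ((1 - q) * p.1, p.2) | p <- s2]).
  split; first split.
  + move=> p; rewrite mem_cat => /orP [] /mapP [p' p's ->] /=; rewrite rmorphM /=.
    * by rewrite mulr_ge0 //; apply: Hw1.
    * rewrite mulr_ge0 //; last by apply: Hw2.
      by rewrite rmorphB rmorph1 subr_ge0.
  + rewrite big_cat !big_map /=.
    under eq_bigr do rewrite rmorphM.
    under [X in _ + X]eq_bigr do rewrite rmorphM.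
    by rewrite -!mulr_sumr Hs1 Hs2 !mulr1 rmorphB rmorph1 addrC subrK.
  + suff -> : (y1 : convex_lmodType Y) <| l |> (y2 : convex_lmodType Y) -
        combF g j ([seq (q * p.1, p.2) | p <- s1] ++
                   [seq ((1 - q) * p.1, p.2) | p <- s2]) x =
        h (l%:num - ratr q) by [].
    rewrite /h /combF big_cat !big_map /=.
    have -> : l%:num - (l%:num - ratr q) = ratr q by rewrite opprB addrC subrK.
    congr (_ - (_ + _)).
    * rewrite scaler_sumr; apply: eq_bigr => p _; by rewrite rmorphM scalerA.
    * rewrite scaler_sumr; apply: eq_bigr => p _.
      by rewrite rmorphM rmorphB rmorph1 scalerA.
Qed.

Theorem theorem1p6 (R : realType) (X : topologicalType) (a : cord) :
  ole oone a ->
  (forall (Y : metricType R) (f : X -> Y), Baire_class a f ->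
    exists G : nat -> set (X * Y),
      (forall n, Sigma_class a (G n)) /\
      \bigcap_n G n = graph_of f /\
      (forall x, (fun n => diam mdist (section_at (G n) x)) @ \oo --> 0%E)) /\
  (forall (Y : tvsType R) (d : Y -> Y -> R) (f : X -> Y),
    frechet_metric d -> Baire_class a f ->
    exists G : nat -> set (X * Y),
      (forall n, Sigma_strip a (G n)) /\
      \bigcap_n G n = graph_of f /\
      (forall x, (fun n => diam d (section_at (G n) x)) @ \oo --> 0%E)).
Proof.
move=> Ha; split.
- move=> Y f Hf; exact: metric_part.
- move=> Y d f Hd Hf; exact: frechet_part.
Qed.
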